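(* Let $\Gamma$ be a metrized graph that is a tree with $v$ vertices. For any $p \in V(\Gamma)$, $$\ell(\Gamma) = \sum_{q \in V(\Gamma)}\big(2-\mathrm{val}(q)\big)\,r(p,q).$$ In particular, if each edge length is equal to $1$, $$v-1 = \sum_{q \in V(\Gamma)}\big(2-\mathrm{val}(q)\big)\,r(p,q).$$
   Context: A metrized graph is a finite connected graph each of whose edges is identified with a closed segment of positive length; its vertex set $V(\Gamma)$ is a finite nonempty set containing every point of valence $\neq 2$, and $v=\#V(\Gamma)$. $\mathrm{val}(q)$ is the valence of $q$ (number of directions emanating from $q$). $\ell(\Gamma)$ is the total length. $r(p,q)$ is the effective resistance between $p$ and $q$ (edges as resistors of resistance equal to length), which on a tree equals the path distance. *)

(* Defs.v *)
From Stdlib Require Import ClassicalEpsilon.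
From mathcomp Require Import all_boot all_order all_algebra.
Set Implicit Arguments. Unset Strict Implicit. Unset Printing Implicit Defensive.
Import Order.TTheory GRing.Theory Num.Theory.
Local Open Scope ring_scope.

(* A metrized tree is modelled by its vertex set V(Gamma) = the finite type T,
   the (simple) adjacency relation e : rel T of the underlying combinatorial
   graph, and the edge lengths w : T -> T -> R (only values on edges matter). *)

Definition acyclic (T : finType) (e : rel T) : Prop :=
  forall (x : T) (s : seq T), uniq (x :: s) -> (2 <= size s)%N ->
    path e x s -> ~~ e (last x s) x.

Definition is_tree (T : finType) (e : rel T) : Prop :=
  symmetric e /\ irreflexive e /\ (forall x y : T, connect e x y) /\ acyclic e.

Definition edge_lengths (R : realFieldType) (T : finType) (e : rel T)
  (w : T -> T -> R) : Prop :=
  forall x y : T, e x y -> 0 < w x y /\ w x y = w y x.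

(* total length: each unordered edge {x,y} is counted twice in the ordered sum *)
Definition total_length (R : realFieldType) (T : finType) (e : rel T)
  (w : T -> T -> R) : R :=
  (\sum_(x : T) \sum_(y : T | e x y) w x y) / 2%:R.

Definition valence (T : finType) (e : rel T) (q : T) : nat :=
  #|[pred y | e q y]|.

Definition is_upath (T : finType) (e : rel T) (p q : T) (s : seq T) : Prop :=
  [/\ path e p s, last p s = q & uniq (p :: s)].

Definition path_length (R : realFieldType) (T : finType) (w : T -> T -> R)
  (p : T) (s : seq T) : R :=
  \sum_(xy <- zip (p :: s) s) w xy.1 xy.2.

(* r(p,q) on a tree: length of the (unique) simple path from p to q *)
Definition tree_dist (R : realFieldType) (T : finType) (e : rel T)
  (w : T -> T -> R) (p q : T) : R :=
  path_length w p (epsilon (inhabits [::]) (is_upath e p q)).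

(* Main.v *)
Require Import Defs.
From Stdlib Require Import ClassicalEpsilon.
From mathcomp Require Import all_boot all_order all_algebra ring lra.
Set Implicit Arguments. Unset Strict Implicit. Unset Printing Implicit Defensive.

Lemma path_suffix (T : eqType) (e : rel T) x s u y v :
  path e x s -> x :: s = u ++ y :: v -> path e y v.
Proof.
case: u => [|a u] /= Hp [] Ex Es.
  by subst.
by subst; move: Hp; rewrite cat_path => /andP[_] /=; case/andP.
Qed.

Lemma split_first (T : eqType) (s1 s2 : seq T) :
  has (mem s2) s1 ->
  exists u c v, [/\ s1 = u ++ c :: v, c \in s2 & forall z, z \in u -> z \notin s2].
Proof.
elim: s1 => [|a s IH] //= /orP[Ha|Hs].
  by exists [::], a, s; split.
have [Ha|Ha] := boolP (a \in s2).
  by exists [::], a, s; split.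
have [u [c [v [-> Hc Hu]]]] := IH Hs.
exists (a :: u), c, v; split => // z; rewrite inE => /orP[/eqP->|] //; exact: Hu.
Qed.

Lemma path_rev_sym (T : eqType) (e : rel T) x s :
  symmetric e -> path e x s -> path e (last x s) (rev (belast x s)).
Proof.
move=> sym Hp; rewrite rev_path; rewrite (@eq_path _ _ e) //.
Qed.

Lemma upath_unique (T : finType) (e : rel T) p q s1 s2 :
  is_tree e -> is_upath e p q s1 -> is_upath e p q s2 -> s1 = s2.
Proof.
move=> [sym [irr [_ acyc]]].
elim: s1 p s2 => [|a s1 IH] p s2 [P1 L1 U1] [P2 L2 U2].
  case: s2 P2 L2 U2 => [|b s2] //= _ L2 U2; exfalso.
  move: L1 => /= L1.
  have := mem_last b s2; rewrite L2 -L1 => H.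
  by move: U2; rewrite /= H.
case: s2 P2 L2 U2 => [|b s2] P2 L2 U2.
  exfalso; move: L2 => /= L2.
  move: L1 => /= L1.
  have := mem_last a s1; rewrite L1 -L2 => H.
  by move: U1; rewrite /= H.
have [Hab|Hab] := eqVneq a b.
  subst b; congr (_ :: _); apply: (IH a).
    split; [by case/andP: P1| by [] | by case/andP: U1].
  split; [by case/andP: P2| by [] | by case/andP: U2].
exfalso.
have Hq1 : q \in a :: s1 by rewrite -L1 /=; exact: mem_last.
have Hq2 : q \in b :: s2 by rewrite -L2 /=; exact: mem_last.
have : has (mem (b :: s2)) (a :: s1) by apply/hasP; exists q.
case/split_first => u [c [v [E1 Hc Hu]]].
have [u2 [v2 E2]] : exists u2 v2, b :: s2 = u2 ++ c :: v2.
  by case/splitPr: Hc => u2 v2; exists u2, v2.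
rewrite E2 in P2 U2 Hu.
(* cycle p :: (u ++ c :: rev u2) *)
have Hs : (2 <= size (u ++ c :: rev u2))%N.
  rewrite size_cat /= size_rev.
  case: u E1 Hu => [|x u] E1 Hu; last by rewrite /= addSn addnS.
  case: u2 E2 P2 U2 Hu => [|y u2] E2 P2 U2 Hu //=.
  by case: E1 => Ea _; case: E2 => Eb _; move: Hab; rewrite Ea Eb eqxx.
have Pu : path e p (rcons u c).
  by move: P1; rewrite E1 -cat_rcons cat_path => /andP[].
have Pu2 : path e p (rcons u2 c).
  by move: P2; rewrite -cat_rcons cat_path => /andP[].
have Pr := path_rev_sym sym Pu2.
rewrite last_rcons belast_rcons rev_cons rcons_path in Pr.
case/andP: Pr => Pr1 Pr2.
have := acyc p (u ++ c :: rev u2).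
rewrite Hs last_cat /= -cat_rcons cat_path Pu /= last_rcons Pr1 Pr2.
move=> H.
suff HU : uniq ((p :: u) ++ (c :: rev u2)).
  have HU' : uniq (p :: (rcons u c ++ rev u2)) by rewrite cat_rcons; exact: HU.
  by move: (H HU' isT isT).
move: U1 U2; rewrite E1 -!cat_cons !cat_uniq.
case/and3P => Upu /hasPn Hn1 _ /and3P[Upu2 /hasPn Hn2 _].
apply/and3P; split => //.
  apply/hasPn => z; rewrite inE mem_rev => /orP[/eqP->|Hz].
    by apply: Hn1; rewrite inE eqxx.
  rewrite inE negb_or; apply/andP; split.
    by apply/negP => /eqP Ez; subst z; move: Upu2 => /= /andP[/negP].
  by apply/negP => Hzu; have := Hu z Hzu; rewrite mem_cat Hz.
rewrite /= rev_uniq mem_rev.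
have := Hn2 c; rewrite inE eqxx inE negb_or => /(_ isT) /andP[_ ->].
by move: Upu2 => /= /andP[_ ->].
Qed.
Definition Pth (T : finType) (e : rel T) (p q : T) : seq T :=
  epsilon (inhabits [::]) (is_upath e p q).
Definition par (T : finType) (e : rel T) (p q : T) : T :=
  last p (belast p (Pth e p q)).

Lemma Pth_spec (T : finType) (e : rel T) p q :
  is_tree e -> is_upath e p q (Pth e p q).
Proof.
move=> [_ [_ [conn _]]]; rewrite /Pth; apply: epsilon_spec.
have /connectP [s Hs ->] := conn p q.
case: (shortenP Hs) => s' Hs' Us' _.
by exists s'; split.
Qed.

Lemma Pth_uniq (T : finType) (e : rel T) p q s :
  is_tree e -> is_upath e p q s -> s = Pth e p q.
Proof. by move=> tr H; apply: (upath_unique tr H (Pth_spec p q tr)). Qed.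

Lemma Pth_p (T : finType) (e : rel T) p :
  is_tree e -> Pth e p p = [::].
Proof. by move=> tr; apply/esym/(Pth_uniq tr); split. Qed.

Lemma Pth_par (T : finType) (e : rel T) p q :
  is_tree e -> q != p -> Pth e p q = rcons (Pth e p (par e p q)) q
                         /\ e (par e p q) q.
Proof.
move=> tr Hq.
have [P1 L1 U1] := Pth_spec p q tr.
rewrite /par.
case: (lastP (Pth e p q)) P1 L1 U1 => [|s x] P1 L1 U1.
  by move: L1 => /= L1; rewrite L1 eqxx in Hq.
rewrite last_rcons in L1; subst x.
rewrite belast_rcons /=.
move: P1; rewrite rcons_path => /andP[Ps Ee].
split => //.
congr rcons; apply: (Pth_uniq tr); split => //.
by move: U1; rewrite -rcons_cons rcons_uniq => /andP[].
Qed.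

Lemma edge_cases (T : finType) (e : rel T) p q y :
  is_tree e -> e q y ->
  ((q != p) && (y == par e p q)) || ((y != p) && (q == par e p y)).
Proof.
move=> tr Eqy.
have [sym [irr [_ acyc]]] := tr.
have [P1 L1 U1] := Pth_spec p q tr.
case: (boolP (y \in p :: Pth e p q)) => Hy.
  have Hq : q != p.
    apply/negP => /eqP Eq; subst q.
    move: Hy; rewrite (Pth_p p tr) inE => /eqP Ey; subst y.
    by rewrite irr in Eqy.
  rewrite Hq /=; apply/orP; left.
  have [Eq _] := Pth_par tr Hq.
  have [PS LS US] := Pth_spec p (par e p q) tr.
  move: Hy P1 L1 U1; rewrite Eq -rcons_cons mem_rcons inE => /orP[/eqP Ey|Hy].
    by subst y; rewrite irr in Eqy.
  move=> P1 L1 U1.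
  have [u [v E]] : exists u v, p :: Pth e p (par e p q) = u ++ y :: v.
    by case/splitPr: Hy => u v; exists u, v.
  case: v E => [|z v] E.
    have : last p (p :: Pth e p (par e p q)) = y by rewrite E last_cat.
    by rewrite /= LS => ->.
  exfalso.
  have E' : p :: rcons (Pth e p (par e p q)) q = u ++ y :: rcons (z :: v) q.
    by rewrite -(rcons_cons p) E rcons_cat.
  have Py := path_suffix P1 E'.
  have Uy : uniq (y :: rcons (z :: v) q).
    by move: U1; rewrite E rcons_cat cat_uniq => /and3P[].
  have Hsz : (2 <= size (rcons (z :: v) q))%N by rewrite size_rcons.
  by have := acyc y _ Uy Hsz Py; rewrite last_rcons Eqy.
have HP : rcons (Pth e p q) y = Pth e p y.
  apply: (Pth_uniq tr); split.
  - by rewrite rcons_path P1 L1.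
  - by rewrite last_rcons.
  - by rewrite -rcons_cons rcons_uniq Hy.
apply/orP; right; apply/andP; split.
  by apply/negP => /eqP Ey; subst y; rewrite inE eqxx in Hy.
by rewrite /par -HP belast_rcons /= L1.
Qed.

Lemma edge_excl (T : finType) (e : rel T) p q y :
  is_tree e ->
  ~~ (((q != p) && (y == par e p q)) && ((y != p) && (q == par e p y))).
Proof.
move=> tr; apply/negP => /andP[/andP[Hq /eqP Ey] /andP[Hy /eqP Eq]].
have [E1 _] := Pth_par tr Hq.
have [E2 _] := Pth_par tr Hy.
rewrite -Ey in E1; rewrite -Eq in E2.
have := congr1 size E1; rewrite E2 !size_rcons.
by move=> /eqP; rewrite -addn2 -{1}(addn0 (size _)) eqn_add2l.
Qed.

Import Order.TTheory GRing.Theory Num.Theory.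
Local Open Scope ring_scope.

Lemma path_length_rcons (R : realFieldType) (T : finType) (w : T -> T -> R) p s x :
  path_length w p (rcons s x) = path_length w p s + w (last p s) x.
Proof.
elim: s p => [|a s IH] p.
  by rewrite /path_length /= big_seq1 big_nil add0r.
rewrite /path_length /= !big_cons -/(path_length w a (rcons s x)) IH.
by rewrite /path_length addrA.
Qed.

Lemma dist_par (R : realFieldType) (T : finType) (e : rel T) (w : T -> T -> R) p q :
  is_tree e -> q != p ->
  tree_dist e w p q = tree_dist e w p (par e p q) + w (par e p q) q.
Proof.
move=> tr Hq.
have [E _] := Pth_par tr Hq.
have [_ L _] := Pth_spec p (par e p q) tr.
rewrite /tree_dist -/(Pth e p q) -/(Pth e p (par e p q)) E path_length_rcons.
by rewrite L.
Qed.

Lemma sum_edges (R : realFieldType) (T : finType) (e : rel T) p (f : T -> T -> R) :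
  is_tree e ->
  \sum_x \sum_(y | e x y) f x y
    = \sum_(x | x != p) (f x (par e p x) + f (par e p x) x).
Proof.
move=> tr.
have H1 : forall x, \sum_(y | e x y) f x y =
  \sum_y ((if (x != p) && (y == par e p x) then f x y else 0)
        + (if (y != p) && (x == par e p y) then f x y else 0)).
  move=> x; rewrite big_mkcond; apply: eq_bigr => y _.
  have := edge_excl p x y tr.
  case: (boolP (e x y)) => Exy.
    have := edge_cases p tr Exy.
    by case: ((x != p) && (y == par e p x)); case: ((y != p) && (x == par e p y));
      rewrite ?addr0 ?add0r.
  case A: ((x != p) && (y == par e p x)).
    case/andP: A => Hx /eqP Ey; subst y.
    by have [_ Ee] := Pth_par tr Hx; rewrite (proj1 tr) Ee in Exy.
  case B: ((y != p) && (x == par e p y)); last by rewrite addr0.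
  case/andP: B => Hy /eqP Ex; subst x.
  by have [_ Ee] := Pth_par tr Hy; rewrite Ee in Exy.
rewrite (eq_bigr _ (fun x _ => H1 x)).
under eq_bigr do rewrite big_split.
rewrite big_split /= [in RHS]big_split /=.
congr (_ + _).
  rewrite [in RHS]big_mkcond; apply: eq_bigr => x _.
  case: (boolP (x != p)) => Hx /=.
    by rewrite (bigD1 (par e p x)) //= eqxx big1 ?addr0 // => i /negbTE ->.
  by rewrite big1.
rewrite exchange_big /=.
rewrite [in RHS]big_mkcond /=; apply: eq_bigr => y _.
case: (boolP (y != p)) => Hy /=.
  rewrite (bigD1 (par e p y)) //= eqxx big1 ?addr0 // => i.
  by rewrite eq_sym => /negbTE ->.
by rewrite big1.
Qed.

Theorem lemma4p1 (R : realFieldType) (T : finType) (e : rel T)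
  (w : T -> T -> R) (p : T) :
  is_tree e -> edge_lengths e w ->
  total_length e w
    = \sum_(q : T) (2%:R - (valence e q)%:R) * tree_dist e w p q
  /\ ((forall x y : T, e x y -> w x y = 1) ->
      (#|T|.-1)%:R
        = \sum_(q : T) (2%:R - (valence e q)%:R) * tree_dist e w p q).
Proof.
move=> tr wl.
pose d := tree_dist e w p.
have Hd0 : d p = 0.
  by rewrite /d /tree_dist -/(Pth e p p) Pth_p // /path_length /= big_nil.
have Htot : total_length e w = \sum_(x | x != p) w (par e p x) x.
  rewrite /total_length (sum_edges p w tr).
  rewrite (eq_bigr (fun x => w (par e p x) x *+ 2)); last first.
    move=> x Hx; have [_ Ee] := Pth_par tr Hx.
    by have [_ ->] := wl _ _ Ee; rewrite mulr2n.
  by rewrite sumrMnl -[_ *+ 2]mulr_natr mulfK // pnatr_eq0.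
have Hval : \sum_q (valence e q)%:R * d q
            = \sum_(x | x != p) (d x + d (par e p x)).
  rewrite -(sum_edges p (fun x _ => d x) tr); apply: eq_bigr => q _.
  rewrite (eq_bigl (fun y => y \in [pred y | e q y])) // sumr_const.
  by rewrite mulr_natl.
have HD : \sum_(x | x != p) d x
          = \sum_(x | x != p) d (par e p x) + \sum_(x | x != p) w (par e p x) x.
  rewrite -big_split; apply: eq_bigr => x Hx.
  exact: dist_par.
have Hmain : total_length e w
    = \sum_(q : T) (2%:R - (valence e q)%:R) * tree_dist e w p q.
  rewrite -/d.
  rewrite (eq_bigr (fun q => 2%:R * d q - (valence e q)%:R * d q)); last first.
    by move=> q _; rewrite mulrBl.
  rewrite sumrB Hval -mulr_sumr (bigD1 p) //= Hd0 add0r big_split /=.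
  rewrite Htot HD.
  lra.
split => // w1.
rewrite -Hmain Htot.
rewrite (eq_bigr (fun _ => 1)); last first.
  by move=> x Hx; have [_ Ee] := Pth_par tr Hx; rewrite w1.
rewrite (eq_bigl (fun x => x \in predC1 p)) // sumr_const cardC1.
by [].
Qed.
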